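(* Let $f,g$ be elements both lying in $A$, or both lying in $B$, such that $f\notin HgH$. Then there exists an integer $t_0>1$ such that for every positive integer $t$ divisible by $t_0$, $f\rho_t\notin H(t)\,(g\rho_t)\,H(t)$.
   Context: Fix integers $m,n>1$ and let $G_{mn}=\langle a,b;\ [a^m,b^n]=1\rangle$. Put $c=a^m$, $d=b^n$, $H=\langle c,d\rangle$, $A=\langle a,H\rangle$, $B=\langle b,H\rangle$. For an integer $t>1$ let $G_{mn}(t)=\langle a,b;\ [a^m,b^n]=1,\ a^{mt}=b^{nt}=1\rangle$, $\rho_t:G_{mn}\to G_{mn}(t)$ the natural homomorphism, and $H(t)=H\rho_t$. *)

(* Defs.v *)
(* Finitely presented groups are encoded by words
   in the free group on {a, b}, with equality in the presented group given by
   the equivalence relation generated by free cancellation and insertion/deletion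
   of relators. *)
From Stdlib Require Import List.
From mathcomp Require Import all_boot.
Set Implicit Arguments. Unset Strict Implicit. Unset Printing Implicit Defensive.

Inductive gen := ga | gb.

(* a letter: generator together with an "inverse" flag (true = inverse) *)
Definition letter := (gen * bool)%type.
Definition word := seq letter.

Definition inv_letter (x : letter) : letter := (x.1, ~~ x.2).
Definition inv_word (w : word) : word := rev (map inv_letter w).

Inductive eqw (R : seq word) : word -> word -> Prop :=
| eqw_refl w : eqw R w w
| eqw_sym u v : eqw R u v -> eqw R v u
| eqw_trans u v w : eqw R u v -> eqw R v w -> eqw R u w
| eqw_cancel u v x : eqw R (u ++ x :: inv_letter x :: v) (u ++ v)
| eqw_rel u v r : List.In r R -> eqw R (u ++ r ++ v) (u ++ v).

Definition a_w : word := [:: (ga, false)].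
Definition b_w : word := [:: (gb, false)].
Definition apow (k : nat) : word := nseq k (ga, false).
Definition bpow (k : nat) : word := nseq k (gb, false).
Definition comm_w (x y : word) : word := inv_word x ++ inv_word y ++ x ++ y.

Definition rels (m n : nat) : seq word := [:: comm_w (apow m) (bpow n)].
Definition rels_t (m n t : nat) : seq word :=
  [:: comm_w (apow m) (bpow n); apow (m * t); bpow (n * t)].

Definition gen_word (gens : seq word) (w : word) : Prop :=
  exists l : seq (nat * bool),
    all (fun p => p.1 < size gens) l /\
    w = flatten (map (fun p => let x := nth [::] gens p.1 in
                               if p.2 then inv_word x else x) l).

Definition in_subgroup (R : seq word) (gens : seq word) (f : word) : Prop :=
  exists w, gen_word gens w /\ eqw R f w.

Definition in_dcoset (R : seq word) (gens : seq word) (f g : word) : Prop :=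
  exists h1 h2, gen_word gens h1 /\ gen_word gens h2 /\ eqw R f (h1 ++ g ++ h2).

(* c = a^m, d = b^n, H = <c, d>, A = <a, H>, B = <b, H> *)
Definition Hgens (m n : nat) : seq word := [:: apow m; bpow n].
Definition Agens (m n : nat) : seq word := [:: a_w; apow m; bpow n].
Definition Bgens (m n : nat) : seq word := [:: b_w; apow m; bpow n].

(* Main.v *)
From HB Require Import structures.
Require Import Defs.
From mathcomp Require Import all_boot all_algebra zify.
Set Implicit Arguments. Unset Strict Implicit. Unset Printing Implicit Defensive.

Module P1.
Set Implicit Arguments. Unset Strict Implicit. Unset Printing Implicit Defensive.
Import GRing.Theory Num.Theory.

Definition geqb (g h : gen) : bool :=
  match g, h with ga, ga => true | gb, gb => true | _, _ => false end.
Lemma geqP : Equality.axiom geqb.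
Proof. by case; case; constructor. Qed.
HB.instance Definition _ := hasDecEq.Build gen geqP.

Section EqwBasics.
Variable R : seq word.
Notation "u ~ v" := (eqw R u v) (at level 70).

Lemma eqw_ctx a b u v : u ~ v -> (a ++ u ++ b) ~ (a ++ v ++ b).
Proof.
elim=> [w|u1 v1 _ IH|u1 v1 w1 _ IH1 _ IH2|u1 v1 x|u1 v1 r Hr].
- exact: eqw_refl.
- exact: eqw_sym.
- exact: eqw_trans IH2.
- have -> : a ++ (u1 ++ x :: inv_letter x :: v1) ++ b = (a ++ u1) ++ x :: inv_letter x :: (v1 ++ b)
    by rewrite -!catA.
  have -> : a ++ (u1 ++ v1) ++ b = (a ++ u1) ++ (v1 ++ b) by rewrite -!catA.
  exact: eqw_cancel.
- have -> : a ++ (u1 ++ r ++ v1) ++ b = (a ++ u1) ++ r ++ (v1 ++ b) by rewrite -!catA.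
  have -> : a ++ (u1 ++ v1) ++ b = (a ++ u1) ++ (v1 ++ b) by rewrite -!catA.
  exact: eqw_rel.
Qed.

Lemma eqw_cat u u' v v' : u ~ u' -> v ~ v' -> (u ++ v) ~ (u' ++ v').
Proof.
move=> H1 H2; apply: (@eqw_trans _ _ (u' ++ v)).
  exact: (eqw_ctx [::] v H1).
by have := eqw_ctx u' [::] H2; rewrite !cats0; apply.
Qed.

Lemma eqw_catl a u v : u ~ v -> (a ++ u) ~ (a ++ v).
Proof. by move=> H; apply: eqw_cat => //; apply: eqw_refl. Qed.
Lemma eqw_catr b u v : u ~ v -> (u ++ b) ~ (v ++ b).
Proof. by move=> H; apply: eqw_cat => //; apply: eqw_refl. Qed.
End EqwBasics.

Lemma eqw_mono R1 R2 u v : (forall r, List.In r R1 -> List.In r R2) ->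
  eqw R1 u v -> eqw R2 u v.
Proof.
move=> HR; elim=> [w|u1 v1 _ IH|u1 v1 w1 _ IH1 _ IH2|u1 v1 x|u1 v1 r Hr].
- exact: eqw_refl.
- exact: eqw_sym.
- exact: eqw_trans IH2.
- exact: eqw_cancel.
- by apply: eqw_rel; apply: HR.
Qed.

End P1.
Import P1.

Module P2.
Set Implicit Arguments. Unset Strict Implicit. Unset Printing Implicit Defensive.
Import GRing.Theory Num.Theory.
Local Open Scope ring_scope.

Definition pw (g : gen) (e : int) : word :=
  match e with Posz k => nseq k (g, false) | Negz k => nseq k.+1 (g, true) end.

Lemma pw0 g : pw g 0 = [::]. Proof. by []. Qed.
Lemma pw_nat g (k : nat) : pw g k = nseq k (g, false). Proof. by []. Qed.
Lemma pwN_nat g (k : nat) : pw g (- (k%:Z)) = nseq k (g, true).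
Proof. by case: k. Qed.

Lemma nseqS_r T k (x : T) : nseq k.+1 x = nseq k x ++ [:: x].
Proof. by elim: k => //= k <-. Qed.

Lemma inv_word_nseq k g b : inv_word (nseq k (g, b)) = nseq k (g, ~~ b).
Proof.
rewrite /inv_word map_nseq; elim: k => //= k IH.
by rewrite rev_cons IH -cats1 -nseqS_r.
Qed.

Lemma int_cases (a : int) : (exists k : nat, a = k%:Z) \/ (exists k : nat, a = - (k.+1)%:Z).
Proof. case: a => k; [left|right]; exists k => //. Qed.

Section PW.
Variable R : seq word.
Notation "u ~ v" := (eqw R u v) (at level 70).

Lemma pw_succ g a : (pw g a ++ [:: (g, false)]) ~ (pw g (a + 1)).
Proof.
case: (int_cases a) => [[k ->]|[k ->]].
  have -> : k%:Z + 1 = (k.+1)%:Z by lia.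
  by rewrite !pw_nat nseqS_r; apply: eqw_refl.
have -> : - (k.+1)%:Z + 1 = - (k%:Z) by lia.
rewrite !pwN_nat nseqS_r -catA /=.
have H := @eqw_cancel R (nseq k (g,true)) [::] (g,true); rewrite cats0 in H; exact: H.
Qed.

Lemma pw_pred g a : (pw g a ++ [:: (g, true)]) ~ (pw g (a - 1)).
Proof.
case: (int_cases a) => [[[|k] ->]|[k ->]].
- by apply: eqw_refl.
- have -> : (k.+1)%:Z - 1 = k%:Z by lia.
  rewrite !pw_nat nseqS_r -catA /=.
  have H := @eqw_cancel R (nseq k (g,false)) [::] (g,false); rewrite cats0 in H; exact: H.
- have -> : - (k.+1)%:Z - 1 = - (k.+2)%:Z by lia.
  rewrite !pwN_nat [nseq k.+2 _]nseqS_r; apply: eqw_refl.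
Qed.

Lemma pw_add g a b : (pw g a ++ pw g b) ~ (pw g (a + b)).
Proof.
case: (int_cases b) => [[k ->]|[k ->]].
  elim: k => [|k IH]; first by rewrite cats0 addr0; apply: eqw_refl.
  rewrite pw_nat nseqS_r catA.
  apply: eqw_trans (eqw_catr _ IH) _.
  have -> : a + (k.+1)%:Z = (a + k%:Z) + 1 by lia.
  exact: pw_succ.
elim: k => [|k IH].
  have -> : a + - (1%:Z) = a - 1 by lia.
  exact: pw_pred.
rewrite pwN_nat nseqS_r catA -pwN_nat.
apply: eqw_trans (eqw_catr _ IH) _.
have -> : a + - (k.+2)%:Z = (a + - (k.+1)%:Z) - 1 by lia.
exact: pw_pred.
Qed.

Lemma pw_comm g a b : (pw g a ++ pw g b) ~ (pw g b ++ pw g a).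
Proof.
apply: eqw_trans (pw_add _ _ _) _; rewrite addrC; apply: eqw_sym; exact: pw_add.
Qed.

Lemma pw_inv g a : (pw g a ++ pw g (- a)) ~ [::].
Proof. apply: eqw_trans (pw_add _ _ _) _; rewrite subrr; exact: eqw_refl. Qed.
End PW.

End P2.
Import P2.

Module P3.
Set Implicit Arguments. Unset Strict Implicit. Unset Printing Implicit Defensive.
Import GRing.Theory Num.Theory.
Local Open Scope ring_scope.

Definition syl := (gen * int)%type.

Section Model.
Variable Mod : gen -> int.
Hypothesis hMod : forall g, 0 < Mod g.

Definition nrm g (e : int) : int :=
  let r := (e %% Mod g)%Z in if 2 * r <= Mod g then r else r - Mod g.

Lemma nrm_mod g e : (nrm g e %% Mod g)%Z = (e %% Mod g)%Z.
Proof.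
rewrite /nrm; case: ifP => _; first by rewrite modz_mod.
set r := (e %% Mod g)%Z.
have -> : r - Mod g = (-1) * Mod g + r by lia.
by rewrite modzMDl modz_mod.
Qed.

Lemma nrm_eqmod g a b : (a %% Mod g)%Z = (b %% Mod g)%Z -> nrm g a = nrm g b.
Proof. by rewrite /nrm => ->. Qed.

Lemma nrmD g a b : nrm g (nrm g a + b) = nrm g (a + b).
Proof. apply: nrm_eqmod; by rewrite -modzDml nrm_mod modzDml. Qed.

Lemma nrm_id g a : nrm g (nrm g a) = nrm g a.
Proof. by have := nrmD g a 0; rewrite !addr0. Qed.

Lemma nrm0P g a : (nrm g a == 0) = ((a %% Mod g)%Z == 0).
Proof.
have := hMod g; rewrite /nrm; case: ifP => H1 H2.
  by [].
apply/idP/idP => /eqP H; lia.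
Qed.

Lemma nrm_dvd g a : exists k, a = nrm g a + Mod g * k.
Proof.
exists ((a - nrm g a) %/ Mod g)%Z.
have H : (Mod g %| (a - nrm g a))%Z.
  apply/dvdz_mod0P; by rewrite -modzDmr -modzNm nrm_mod modzNm modzDmr subrr mod0z.
rewrite mulrC divzK //; lia.
Qed.

Lemma nrm_small g a : - Mod g < 2 * a <= Mod g -> nrm g a = a.
Proof.
move=> H; have hM := hMod g; rewrite /nrm.
case: (lerP 0 a) => Ha.
  rewrite modz_small; last by lia.
  by rewrite ifT //; lia.
have -> : (a %% Mod g)%Z = a + Mod g.
  by rewrite -(modzDr a (Mod g)) modz_small //; lia.
rewrite ifF; [lia|lia].
Qed.

Lemma nrm_multiple g k : nrm g (Mod g * k) = 0.
Proof. by apply/eqP; rewrite nrm0P modzMr. Qed.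

Definition newsyl g e (s : seq syl) : seq syl :=
  if nrm g e == 0 then s else (g, nrm g e) :: s.

Definition Rs (s : seq syl) (y : syl) : seq syl :=
  match s with
  | (g', e') :: s' => if g' == y.1 then newsyl y.1 (e' + y.2) s' else newsyl y.1 y.2 s
  | [::] => newsyl y.1 y.2 [::]
  end.

Definition okz (z : syl) := (nrm z.1 z.2 == z.2) && (z.2 != 0).
Definition adj (a b : syl) := a.1 != b.1.
Definition wf (s : seq syl) := all okz s && sorted adj s.
Definition hd_not g (s : seq syl) := if s is z :: _ then z.1 != g else true.

Lemma newsylE g e s : newsyl g e s = newsyl g e [::] ++ s.
Proof. by rewrite /newsyl; case: ifP. Qed.

Lemma newsyl_nrm g a b s : nrm g a = nrm g b -> newsyl g a s = newsyl g b s.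
Proof. by rewrite /newsyl => ->. Qed.

Lemma Rs_cons z T y : Rs (z :: T) y = Rs [:: z] y ++ T.
Proof.
case: z => g' e' /=; case: ifP => _; first by rewrite newsylE.
by rewrite newsylE [newsyl _ _ [:: _]]newsylE -catA.
Qed.

Lemma Rs_new s g e : hd_not g s -> Rs s (g, e) = newsyl g e s.
Proof. by case: s => [|[g' e'] s] //= /negbTE ->. Qed.

Lemma wf_cons z s : wf (z :: s) = [&& okz z, hd_not z.1 s & wf s].
Proof.
rewrite /wf /=; case: s => [|z' s] /=; first by rewrite !andbT.
rewrite /adj eq_sym.
by case: (okz z); case: (okz z'); case: (z'.1 != z.1); case: (all okz s).
Qed.

Lemma wf_newsyl g e s : wf s -> hd_not g s -> wf (newsyl g e s).
Proof.
move=> Hs Hh; rewrite /newsyl; case: ifP => H //.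
rewrite wf_cons Hh Hs /okz /= nrm_id eqxx andbT andTb.
exact: negbT.
Qed.

Lemma wf_Rs s y : wf s -> wf (Rs s y).
Proof.
case: y => g e; case: s => [|[g' e'] s] /=; first by move=> _; apply: wf_newsyl.
move=> Hw; case: ifP => /eqP H.
  subst g'; move: Hw; rewrite wf_cons => /and3P [_ Hh Hs]; exact: wf_newsyl.
by apply: wf_newsyl => //=; apply/eqP.
Qed.

Lemma Rs_newsyl s g e1 e2 : hd_not g s ->
  Rs (newsyl g e1 s) (g, e2) = newsyl g (e1 + e2) s.
Proof.
move=> Hh; rewrite {1}/newsyl; case: ifP => H.
  rewrite Rs_new //; apply: newsyl_nrm; by rewrite -nrmD (eqP H) add0r.
by rewrite /= eqxx; apply: newsyl_nrm; rewrite nrmD.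
Qed.

Lemma Rs_merge s g e1 e2 : wf s -> Rs (Rs s (g, e1)) (g, e2) = Rs s (g, e1 + e2).
Proof.
case: s => [|[g' e'] s] Hw; first by rewrite /= Rs_newsyl.
rewrite /=; case: ifP => /eqP Hg.
  subst g'; move: Hw; rewrite wf_cons => /and3P [_ Hh Hs].
  by rewrite Rs_newsyl // addrA.
by rewrite Rs_newsyl //=; apply/eqP.
Qed.

Lemma Rs_triv s g e : wf s -> (Mod g %| e)%Z -> Rs s (g, e) = s.
Proof.
move=> Hw /dvdzP [k ->]; case: s Hw => [|[g' e'] s] Hw.
  by rewrite /= /newsyl mulrC nrm_multiple eqxx.
rewrite /=; case: ifP => /eqP Hg.
  subst g'; move: Hw; rewrite wf_cons => /and3P [/andP [/eqP H1 H2] _ _].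
  rewrite /newsyl.
  have -> : nrm g (e' + k * Mod g) = nrm g e'.
    by apply: nrm_eqmod; rewrite addrC modzMDl.
  by rewrite H1 (negbTE H2).
by rewrite /newsyl mulrC nrm_multiple eqxx.
Qed.

End Model.

End P3.
Import P3.

Module P4.
Set Implicit Arguments. Unset Strict Implicit. Unset Printing Implicit Defensive.
Import GRing.Theory Num.Theory.
Local Open Scope ring_scope.

Section Model2.
Variable Mod : gen -> int.
Hypothesis hMod : forall g, 0 < Mod g.
Notation nrm := (nrm Mod).
Notation newsyl := (newsyl Mod).
Notation Rs := (Rs Mod).
Notation wf := (wf Mod).

Definition L (s : seq syl) y := rev (Rs (rev s) y).

Lemma rev_newsyl0 g e : rev (newsyl g e [::]) = newsyl g e [::].
Proof. by rewrite /P3.newsyl; case: ifP. Qed.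

Lemma wf_rev s : wf (rev s) = wf s.
Proof.
rewrite /P3.wf all_rev rev_sorted; congr (_ && _).
case: s => //= z s; apply: eq_path => a b; by rewrite /adj eq_sym.
Qed.

Lemma wf_L s y : wf s -> wf (L s y).
Proof. by move=> H; rewrite /L wf_rev; apply: wf_Rs; rewrite wf_rev. Qed.

Lemma Rs1 g e y : Rs [:: (g, e)] y =
  if g == y.1 then newsyl y.1 (e + y.2) [::] else newsyl y.1 y.2 [:: (g, e)].
Proof. by []. Qed.

Lemma Rs_new0 g1 e1 g2 e2 : g1 != g2 ->
  Rs (newsyl g1 e1 [::]) (g2, e2) = newsyl g2 e2 [::] ++ newsyl g1 e1 [::].
Proof.
move=> H; rewrite Rs_new; first by rewrite newsylE.
by rewrite /P3.newsyl; case: ifP.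
Qed.

Lemma Rs_L s y1 y2 : Rs (L s y1) y2 = L (Rs s y2) y1.
Proof.
rewrite /L.
case: s => [|h s].
  case: y1 y2 => g1 e1 [g2 e2] /=.
  rewrite !rev_newsyl0.
  case: (g1 =P g2) => [<-|/eqP Hg].
    by rewrite !Rs_newsyl // rev_newsyl0 addrC.
  by rewrite !Rs_new0 // 1?eq_sym // rev_cat !rev_newsyl0.
case: (lastP s) => [|mid l].
  case: h y1 y2 => g e [g1 e1] [g2 e2] /=.
  case: (g =P g1) => [<-|/eqP H1]; case: (g =P g2) => [<-|/eqP H2].
  - by rewrite !rev_newsyl0 !Rs_newsyl // !rev_newsyl0 addrAC.
  - rewrite rev_newsyl0 Rs_new0 // [newsyl g2 e2 [:: _]]newsylE rev_cat /= eqxx.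
    by rewrite rev_newsyl0 [X in rev X]newsylE rev_cat !rev_newsyl0.
  - rewrite (_ : rev [:: (g, e)] = [:: (g,e)]) // !rev_newsyl0 Rs_new0 //.
    rewrite [newsyl g1 e1 [:: _]]newsylE rev_cat rev_newsyl0 /= eqxx.
    by rewrite newsylE rev_cat !rev_newsyl0.
  - have E : g1 = g2 by move: H1 H2; case: g; case: g1; case: g2.
    subst g2.
    rewrite !(newsylE Mod _ _ [:: (g,e)]) !rev_cat !rev_newsyl0 /= (negbTE H1).
    rewrite [newsyl g1 e2 (_ :: _)]newsylE [newsyl g1 e1 (_ :: _)]newsylE rev_cat rev_cons rev_newsyl0.
    by rewrite rev_newsyl0 -cats1 -catA.
rewrite rev_cons rev_rcons rcons_cons Rs_cons rev_cat rev_rcons revK cat_cons Rs_cons.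
rewrite [Rs (h :: rcons _ _) _]Rs_cons rev_cat rev_rcons cat_cons [Rs (l :: _ ++ _) _]Rs_cons !rev_cat !revK.
by rewrite catA.
Qed.
End Model2.

End P4.
Import P4.

Module P5.
Set Implicit Arguments. Unset Strict Implicit. Unset Printing Implicit Defensive.
Import GRing.Theory Num.Theory.
Local Open Scope ring_scope.

Section Run.
Variable Mod : gen -> int.
Hypothesis hMod : forall g, 0 < Mod g.
Notation nrm := (nrm Mod).
Notation newsyl := (newsyl Mod).
Notation Rs := (Rs Mod).
Notation wf := (wf Mod).
Notation L := (L Mod).

Definition act (s : seq syl) (l : letter) : seq syl := Rs s (l.1, if l.2 then -1 else 1).
Definition run := foldl act.

Lemma wf_run s w : wf s -> wf (run s w).
Proof. elim: w s => //= l w IH s H; apply: IH; exact: wf_Rs. Qed.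

Lemma run_cons s a w : run s (a :: w) = run (act s a) w.
Proof. by []. Qed.

Lemma run_cat s u v : run s (u ++ v) = run (run s u) v.
Proof. exact: foldl_cat. Qed.

Lemma Rs0 s g : wf s -> Rs s (g, 0) = s.
Proof. move=> H; apply: Rs_triv => //; exact: dvdz0. Qed.

Lemma run_nseq s k g b : wf s ->
  run s (nseq k (g, b)) = Rs s (g, if b then - (k%:Z) else k%:Z).
Proof.
elim: k s => [|k IH] s H /=; first by case: b; rewrite ?oppr0 Rs0.
rewrite IH; last exact: wf_Rs.
rewrite /act /= Rs_merge //; congr (Rs _ (_, _)); case: (b); lia.
Qed.

Lemma run_pw s g e : wf s -> run s (pw g e) = Rs s (g, e).
Proof.
move=> H; case: e => k; first by rewrite pw_nat run_nseq.
by rewrite (_ : pw g (Negz k) = nseq k.+1 (g,true)) // run_nseq // NegzE.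
Qed.

Lemma act_inv s x : wf s -> act (act s x) (inv_letter x) = s.
Proof.
move=> H; case: x => g b; rewrite /act /= Rs_merge //.
by rewrite (_ : (if b then -1 else 1) + (if ~~ b then -1 else 1) = 0 :> int) ?Rs0 //; case: b.
Qed.

Lemma run_eqw (Rl : seq word) :
  (forall r, List.In r Rl -> forall s, wf s -> run s r = s) ->
  forall u v, eqw Rl u v -> forall s, wf s -> run s u = run s v.
Proof.
move=> HR u v; elim=> [w|u1 v1 _ IH|u1 v1 w1 _ IH1 _ IH2|u1 v1 x|u1 v1 r Hr] s Hs //.
- by rewrite IH.
- by rewrite IH1 // IH2.
- rewrite !run_cat /= act_inv //; apply: wf_run Hs.
- rewrite !run_cat (HR r) //; apply: wf_run Hs.
Qed.

Lemma run_L s y w : wf s -> run (L s y) w = L (run s w) y.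
Proof.
elim: w s => //= l w IH s H.
by rewrite /act Rs_L IH //; apply: wf_Rs.
Qed.

Definition strip (y : gen) (s : seq syl) := if s is z :: s' then (if z.1 == y then s' else s) else s.
Definition Ik y s := strip y (rev (strip y s)).

Lemma Ik_rev y s : Ik y (rev s) = rev (Ik y s).
Proof.
rewrite /Ik; case: s => [|h s] //.
case: (lastP s) => [|mid l] /=; first by case: ifP => H //=; rewrite H.
rewrite rev_cons rev_rcons rcons_cons /=.
case: ifP => Hl; case: ifP => Hh; rewrite ?rev_rcons ?rev_cons ?revK /= ?Hl ?Hh // ?rev_rcons //.
all: rewrite ?revK ?rcons_cons /= ?Hl ?Hh ?rev_rcons ?revK ?rev_cons //.
all: by rewrite ?rev_rcons revK.
Qed.

Lemma strip_Rs y s e : wf s -> strip y (Rs s (y, e)) = strip y s.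
Proof.
case: s => [|[g' e'] s] /=.
  by rewrite /P3.newsyl; case: ifP => _ //=; rewrite ?eqxx.
move=> Hw; case: ifP => /eqP H.
  subst g'; move: Hw; rewrite wf_cons => /and3P [_ Hh _].
  rewrite /P3.newsyl; case: ifP => _ //=; rewrite ?eqxx //.
  by case: s Hh => // [[g2 e2] s] /= /negbTE ->.
rewrite /P3.newsyl; case: ifP => _ //=; rewrite ?eqxx ?ifF //; apply/eqP => //.
Qed.

Lemma Ik_Rs y s e : wf s -> Ik y (Rs s (y, e)) = Ik y s.
Proof. by move=> H; rewrite /Ik strip_Rs. Qed.

Lemma Ik_L y s e : wf s -> Ik y (L s (y, e)) = Ik y s.
Proof. by move=> H; rewrite /P4.L Ik_rev Ik_Rs ?wf_rev // Ik_rev revK. Qed.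

Lemma L_nil y : L [::] y = Rs [::] y.
Proof. by rewrite /P4.L /= rev_newsyl0. Qed.

Section HWords.
Variable y : gen.
Variable gens : seq word.
Hypothesis Hgens : forall i, (i < size gens)%N ->
  exists g k, nth [::] gens i = nseq k (g, false) /\ (g = y \/ (Mod g %| k%:Z)%Z).

Lemma run_H s h : wf s -> gen_word gens h -> exists E, run s h = Rs s (y, E).
Proof.
move=> Hs [l [Hl ->]]; elim: l s Hs Hl => [|[i b] l IH] s Hs /=.
  by move=> _; exists 0; rewrite Rs0.
move=> /andP [Hi Hl]; rewrite run_cat.
have [g [k [Hn Hg]]] := Hgens Hi.
have [E0 HE0] : exists E0, run s (if b then inv_word (nth [::] gens i) else nth [::] gens i) = Rs s (y, E0).
  rewrite Hn; case: b; rewrite ?inv_word_nseq run_nseq //=.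
    case: Hg => [->|Hd]; first by exists (- (k%:Z)).
    exists 0; rewrite Rs0 // Rs_triv //; case/dvdzP: Hd => c ->; apply/dvdzP; exists (- c); by rewrite mulNr.
  case: Hg => [->|Hd]; first by exists (k%:Z).
  by exists 0; rewrite Rs0 // Rs_triv.
rewrite HE0; have Hw : wf (Rs s (y, E0)) by apply: wf_Rs.
have [E HE] := IH _ Hw Hl; exists (E0 + E); by rewrite HE Rs_merge.
Qed.

Lemma model_sep (Rl : seq word) F G h1 h2 :
  (forall r, List.In r Rl -> forall s, wf s -> run s r = s) ->
  gen_word gens h1 -> gen_word gens h2 ->
  eqw Rl F (h1 ++ G ++ h2) -> Ik y (run [::] F) = Ik y (run [::] G).
Proof.
move=> HR H1 H2 He.
have w0 : wf [::] by [].
rewrite (run_eqw HR He w0) !run_cat.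
have [E1 ->] := run_H w0 H1.
have wG : wf (run (Rs [::] (y, E1)) G) by apply: wf_run; apply: wf_Rs.
have [E2 ->] := run_H wG H2.
by rewrite Ik_Rs // -L_nil run_L // Ik_L //; apply: wf_run.
Qed.
End HWords.
End Run.

End P5.
Import P5.

Module P6.
Set Implicit Arguments. Unset Strict Implicit. Unset Printing Implicit Defensive.
Import GRing.Theory Num.Theory.
Local Open Scope ring_scope.

Lemma flatten_nseq_nseq T j p (a : T) : flatten (nseq j (nseq p a)) = nseq (p * j) a.
Proof. elim: j => [|j IH] /=; first by rewrite muln0. by rewrite IH mulnS nseqD. Qed.

Lemma pw_mul g (p : nat) (k : int) :
  exists j b, pw g (p%:Z * k) = flatten (nseq j (nseq p (g, b))).
Proof.
case: k => j.
  exists j, false; by rewrite flatten_nseq_nseq -PoszM.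
exists j.+1, true; rewrite flatten_nseq_nseq NegzE mulrN -PoszM pwN_nat //.
Qed.

Section Comm.
Variable Rel : seq word.
Notation "u ~ v" := (eqw Rel u v) (at level 70).

Lemma comm_inv U V U' : (U ++ V) ~ (V ++ U) -> (U ++ U') ~ [::] -> (U' ++ U) ~ [::] ->
  (U' ++ V) ~ (V ++ U').
Proof.
move=> HUV H1 H2.
apply: (@eqw_trans _ _ (U' ++ V ++ U ++ U')).
  apply: eqw_catl; apply: eqw_sym; have := eqw_catl V H1; rewrite cats0; exact.
apply: (@eqw_trans _ _ (U' ++ U ++ V ++ U')).
  apply: eqw_catl; rewrite !catA; apply: eqw_catr; apply: eqw_sym; exact: HUV.
rewrite catA; have := eqw_catr (V ++ U') H2; exact.
Qed.

Lemma comm_sym U V : (U ++ V) ~ (V ++ U) -> (V ++ U) ~ (U ++ V).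
Proof. exact: eqw_sym. Qed.

Lemma comm_pow U V j : (U ++ V) ~ (V ++ U) -> (flatten (nseq j U) ++ V) ~ (V ++ flatten (nseq j U)).
Proof.
move=> H; elim: j => [|j IH] /=; first by rewrite cats0; apply: eqw_refl.
apply: (@eqw_trans _ _ (U ++ V ++ flatten (nseq j U))).
  rewrite -catA; exact: eqw_catl.
rewrite !catA; exact: eqw_catr.
Qed.

Variables (x y : gen) (p q : nat).
Hypothesis hcomm : (pw x p ++ pw y q) ~ (pw y q ++ pw x p).

Lemma comm_base b1 b2 : (nseq p (x, b1) ++ nseq q (y, b2)) ~ (nseq q (y, b2) ++ nseq p (x, b1)).
Proof.
have Hx : (nseq p (x, true) ++ nseq q (y, false)) ~ (nseq q (y, false) ++ nseq p (x, true)).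
  apply: (@comm_inv (pw x p)) => //; rewrite -pwN_nat.
    exact: pw_inv.
  by have := pw_inv Rel x (- (p%:Z)); rewrite opprK.
have Hb1 : (nseq p (x, b1) ++ nseq q (y, false)) ~ (nseq q (y, false) ++ nseq p (x, b1)).
  by case: b1.
case: b2 => //.
apply: comm_sym; apply: (@comm_inv (pw y q)); first exact: comm_sym.
  rewrite -pwN_nat; exact: pw_inv.
by rewrite -pwN_nat; have := pw_inv Rel y (- (q%:Z)); rewrite opprK.
Qed.

Lemma comm_pw k l : (pw x (p%:Z * k) ++ pw y (q%:Z * l)) ~ (pw y (q%:Z * l) ++ pw x (p%:Z * k)).
Proof.
have [j1 [b1 ->]] := pw_mul x p k; have [j2 [b2 ->]] := pw_mul y q l.
apply: comm_pow; apply: comm_sym; apply: comm_pow; apply: comm_sym; exact: comm_base.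
Qed.
End Comm.

End P6.
Import P6.

Module P7.
Set Implicit Arguments. Unset Strict Implicit. Unset Printing Implicit Defensive.
Import GRing.Theory Num.Theory.
Local Open Scope ring_scope.

Lemma dvdzD' (d a b : int) : (d %| a)%Z -> (d %| b)%Z -> (d %| a + b)%Z.
Proof.
by case/dvdzP=> a1 ->; case/dvdzP=> a2 ->; apply/dvdzP; exists (a1 + a2); rewrite mulrDl.
Qed.

Definition wordR (l : seq syl) : word := flatten (map (fun z => pw z.1 z.2) l).
Definition word_of (s : seq syl) : word := wordR (rev s).

Lemma word_of_cons z s : word_of (z :: s) = word_of s ++ pw z.1 z.2.
Proof. by rewrite /word_of /wordR rev_cons map_rcons flatten_rcons. Qed.

Lemma word_of_nil : word_of [::] = [::]. Proof. by []. Qed.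

Section Lift.
Variables (Rel : seq word) (x y : gen) (p q t0 : nat).
Hypothesis hxy : x != y.
Hypothesis hp : (0 < p)%N.
Hypothesis hq : (0 < q)%N.
Hypothesis ht0 : (0 < t0)%N.
Hypothesis hcomm : eqw Rel (pw x p ++ pw y q) (pw y q ++ pw x p).
Notation "u ~ v" := (eqw Rel u v) (at level 70).

Definition ModL g : int := if g == x then p%:Z else (q * t0)%:Z.
Lemma ModL_pos g : 0 < ModL g.
Proof. rewrite /ModL; case: ifP => _; rewrite ltz_nat ?muln_gt0 ?hp ?hq ?ht0 //. Qed.

Notation nrm := (nrm ModL).
Notation newsyl := (newsyl ModL).
Notation Rs := (Rs ModL).
Notation wf := (wf ModL).
Notation cpow k := (pw x (p%:Z * k)).

Lemma gen_other g : g != x -> g = y.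
Proof. by move: hxy; case: x; case: y; case: g. Qed.

Definition ygood (s : seq syl) := all (fun z => (z.1 == y) ==> (q%:Z %| z.2)%Z) s.
Fixpoint sumY (s : seq syl) : nat :=
  if s is z :: s' then ((if z.1 == y then `|z.2|%N else 0%N) + sumY s')%N else 0%N.

Lemma cpow_comm k s : ygood s -> (cpow k ++ word_of s) ~ (word_of s ++ cpow k).
Proof.
elim: s => [|[g e] s IH] /=; first by rewrite word_of_nil cats0 => _; apply: eqw_refl.
move=> /andP [Hz Hs]; rewrite word_of_cons.
apply: (@eqw_trans _ _ (word_of s ++ cpow k ++ pw g e)).
  rewrite !catA; apply: eqw_catr; exact: IH.
rewrite -catA; apply: eqw_catl.
case: (g =P x) => [->|/eqP Hg]; first exact: pw_comm.
move: Hz; rewrite (gen_other Hg) eqxx /= => /dvdzP [l ->].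
rewrite [l * _]mulrC; exact: (comm_pw hcomm).
Qed.

Lemma ygood_newsyl_x w T : ygood T -> ygood (newsyl x w T).
Proof.
by move=> H; rewrite /P3.newsyl; case: ifP => _ //=; rewrite H (negbTE hxy).
Qed.

Lemma sumY_newsyl_x w T : sumY (newsyl x w T) = sumY T.
Proof. by rewrite /P3.newsyl; case: ifP => _ //=; rewrite (negbTE hxy). Qed.

Lemma step_new_x w T : ygood T -> exists k, (word_of T ++ pw x w) ~ (cpow k ++ word_of (newsyl x w T)).
Proof.
move=> HT; have [k Hk] := @nrm_dvd ModL x w.
exists k.
have Hm : ModL x = p%:Z by rewrite /ModL eqxx.
apply: (@eqw_trans _ _ (word_of T ++ cpow k ++ pw x (nrm x w))).
  apply: eqw_catl; apply: eqw_sym.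
  apply: (eqw_trans (pw_add _ _ _ _)); rewrite {2}Hk Hm addrC; exact: eqw_refl.
apply: (@eqw_trans _ _ (cpow k ++ word_of T ++ pw x (nrm x w))).
  rewrite !catA; apply: eqw_catr; apply: eqw_sym; exact: cpow_comm.
apply: eqw_catl; rewrite /P3.newsyl; case: ifP => [/eqP ->|_].
  rewrite cats0; exact: eqw_refl.
rewrite word_of_cons; exact: eqw_refl.
Qed.

Definition Sunit (z : syl) :=
  (z.1 == x) || [&& z.1 == y, (q%:Z %| z.2)%Z & (`|z.2| <= q)%N].

Lemma cpow0 : cpow 0 = [::]. Proof. by rewrite mulr0. Qed.

Lemma step s g e : wf s -> ygood s -> Sunit (g, e) -> (2 * (sumY s + q) < q * t0)%N ->
  exists c, (word_of s ++ pw g e) ~ (cpow c ++ word_of (Rs s (g, e)))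
    /\ ygood (Rs s (g, e)) /\ (sumY (Rs s (g, e)) <= sumY s + q)%N.
Proof.
move=> Hw Hy /orP [/eqP /= ->|/and3P [/= /eqP -> Hd Hb]] Hsz.
  case: s Hw Hy Hsz => [|[g' e'] s'] Hw Hy Hsz.
    have [k Hk] := step_new_x e Hy; exists k; split => //; split.
      exact: ygood_newsyl_x.
    by rewrite sumY_newsyl_x.
  rewrite /=; case: (g' =P x) => [Eg|/eqP Hg].
    subst g'; move: Hy => /= /andP [_ Hy].
    have [k Hk] := step_new_x (e' + e) Hy; exists k; split; last split.
    - rewrite word_of_cons /= -catA; apply: eqw_trans Hk.
      apply: eqw_catl; exact: pw_add.
    - exact: ygood_newsyl_x.
    - by rewrite sumY_newsyl_x /= (negbTE hxy); lia.
  have [k Hk] := step_new_x e Hy; exists k; split => //; split.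
    exact: ygood_newsyl_x.
  by rewrite sumY_newsyl_x /=; lia.
have Hmy : ModL y = (q * t0)%:Z by rewrite /ModL eq_sym (negbTE hxy).
case: s Hw Hy Hsz => [|[g' e'] s'] Hw Hy Hsz.
  have He : nrm y e = e.
    apply: (nrm_small ModL_pos); rewrite Hmy; move: Hsz => /=; lia.
  exists 0; rewrite cpow0 /= /P3.newsyl He; case: ifP => [/eqP ->|Hne] /=.
    by split; [apply: eqw_refl|].
  rewrite eqxx /= Hd; split; [|split] => //.
  by rewrite word_of_cons; apply: eqw_refl.
  lia.
rewrite /=; case: (g' =P y) => [Eg|/eqP Hg].
  subst g'; move: Hy Hsz => /= /andP [Hd' Hy]; rewrite eqxx => Hsz.
  rewrite eqxx in Hd'.
  have He : nrm y (e' + e) = e' + e.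
    apply: (nrm_small ModL_pos); rewrite Hmy; lia.
  exists 0; rewrite cpow0 /= /P3.newsyl He; case: ifP => [/eqP Hz|Hne] /=.
    split; last (split => //; lia).
    rewrite word_of_cons -catA; apply: eqw_trans (eqw_catl _ (pw_add _ _ _ _)) _.
    by rewrite Hz cats0; apply: eqw_refl.
  rewrite eqxx dvdzD' //=; split; last (split => //; lia).
  rewrite !word_of_cons -!catA; apply: eqw_catl; exact: pw_add.
have He : nrm y e = e.
  apply: (nrm_small ModL_pos); rewrite Hmy; move: Hsz => /=; lia.
exists 0; rewrite cpow0 /=.
rewrite /P3.newsyl He; case: ifP => [/eqP ->|Hne] /=.
  split; first by rewrite cats0; apply: eqw_refl.
  by move: Hy; rewrite /= (negbTE Hg) /= => ->; split => //; lia.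
rewrite eqxx Hd /= (negbTE Hg) /=; split; first by rewrite [word_of (_ :: (_ :: _))]word_of_cons; apply: eqw_refl.
by move: Hy Hsz; rewrite /= (negbTE Hg) /= => -> Hsz; split => //; lia.
Qed.

Definition runU (s : seq syl) (us : seq syl) := foldl Rs s us.

Lemma wordR_cons z l : wordR (z :: l) = pw z.1 z.2 ++ wordR l. Proof. by []. Qed.

Lemma cpowD c1 c2 : (cpow c1 ++ cpow c2) ~ cpow (c1 + c2).
Proof. rewrite mulrDr; exact: pw_add. Qed.

Lemma lift_units us s : wf s -> ygood s -> all Sunit us ->
  (2 * (sumY s + q * size us) < q * t0)%N ->
  exists c, (word_of s ++ wordR us) ~ (cpow c ++ word_of (runU s us)) /\ ygood (runU s us).
Proof.
elim: us s => [|[g e] us IH] s Hw Hy.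
  move=> _ _; exists 0; rewrite cpow0 /= cats0; split => //; exact: eqw_refl.
move=> /= /andP [Hu Hus] Hsz.
have Hsz1 : (2 * (sumY s + q) < q * t0)%N by move: Hsz; rewrite /= mulnS; lia.
have [c1 [H1 [Hy1 Hs1]]] := step Hw Hy Hu Hsz1.
have Hw1 : wf (Rs s (g, e)) by apply: wf_Rs.
have Hsz2 : (2 * (sumY (Rs s (g, e)) + q * size us) < q * t0)%N.
  by move: Hsz; rewrite /= mulnS; lia.
have [c2 [H2 Hy2]] := IH _ Hw1 Hy1 Hus Hsz2.
exists (c1 + c2); split => //.
rewrite wordR_cons catA.
apply: eqw_trans (eqw_catr _ H1) _.
rewrite -catA; apply: eqw_trans (eqw_catl _ H2) _.
rewrite catA; apply: eqw_catr; exact: cpowD.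
Qed.

Lemma strip_dec s : ygood s -> exists a, (q%:Z %| a)%Z /\ word_of s = word_of (strip y s) ++ pw y a /\ ygood (strip y s).
Proof.
case: s => [|[g e] s] /=; first by exists 0; split; [exact: dvdz0|].
move=> /andP [Hz Hs]; case: ifP => [/eqP Eg|Hg].
  exists e; subst g; rewrite eqxx /= in Hz; split => //; split => //.
  exact: word_of_cons.
exists 0; split; first exact: dvdz0.
by rewrite cats0; split => //=; rewrite Hz.
Qed.

Lemma stripR_dec l : ygood l -> exists a, (q%:Z %| a)%Z /\ wordR l = pw y a ++ wordR (strip y l).
Proof.
case: l => [|[g e] l] /=; first by exists 0.
move=> /andP [Hz Hs]; case: ifP => [/eqP Eg|Hg].
  exists e; subst g; rewrite eqxx /= in Hz; split => //.
by exists 0; split; first exact: dvdz0.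
Qed.

Lemma ygood_rev l : ygood (rev l) = ygood l.
Proof. by rewrite /ygood all_rev. Qed.

Lemma Ik_dec s : ygood s -> exists a1 a2, [/\ (q%:Z %| a1)%Z, (q%:Z %| a2)%Z &
  word_of s = pw y a2 ++ wordR (Ik y s) ++ pw y a1].
Proof.
move=> Hs; have [a1 [Ha1 [E1 Hs1]]] := strip_dec Hs.
have [a2 [Ha2 E2]] : exists a, (q%:Z %| a)%Z /\   wordR (rev (strip y s)) = pw y a ++ wordR (strip y (rev (strip y s))).
  by apply: stripR_dec; rewrite ygood_rev.
exists a1, a2; split => //.
by rewrite E1 /word_of E2 /Ik catA.
Qed.

Lemma lift_dc usF usG : all Sunit usF -> all Sunit usG ->
  (2 * (q * size usF) < q * t0)%N -> (2 * (q * size usG) < q * t0)%N ->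
  Ik y (runU [::] usF) = Ik y (runU [::] usG) ->
  exists c a b, [/\ (q%:Z %| a)%Z, (q%:Z %| b)%Z &
    wordR usF ~ ((cpow c ++ pw y a) ++ wordR usG ++ pw y b)].
Proof.
move=> HF HG HsF HsG HI.
have [cF [EF YF]] := @lift_units usF [::] isT isT HF HsF.
have [cG [EG YG]] := @lift_units usG [::] isT isT HG HsG.
have [a1 [a2 [Ha1 Ha2 DF]]] := Ik_dec YF.
have [b1 [b2 [Hb1 Hb2 DG]]] := Ik_dec YG.
rewrite -HI in DG.
set M := wordR (Ik y (runU [::] usF)) in DF DG.
have dB : forall u v : int, (q%:Z %| u)%Z -> (q%:Z %| v)%Z -> (q%:Z %| u - v)%Z.
  move=> u v /dvdzP [k1 ->] /dvdzP [k2 ->]; apply/dvdzP; exists (k1 - k2).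
  by rewrite mulrBl.
exists (cF - cG), (a2 - b2), (a1 - b1); split; try exact: dB.
rewrite /= in EF EG; rewrite DF in EF; rewrite DG in EG.
apply: eqw_sym.
apply: (eqw_trans (eqw_catl _ (eqw_catr _ EG))).
apply: eqw_trans _ (eqw_sym EF).
have [j Hj] : exists j, a2 - b2 = q%:Z * j.
  by case/dvdzP: (dB _ _ Ha2 Hb2) => j ->; exists j; rewrite mulrC.
have S1 : (pw y (a2 - b2) ++ cpow cG) ~ (cpow cG ++ pw y (a2 - b2)).
  rewrite Hj; apply: eqw_sym; exact: (comm_pw hcomm).
rewrite -!catA.
apply: (@eqw_trans _ _ (cpow (cF - cG) ++ cpow cG ++ pw y (a2 - b2) ++ pw y b2 ++ M
    ++ pw y b1 ++ pw y (a1 - b1))).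
  apply: eqw_catl; rewrite !catA; do 4 apply: eqw_catr; exact: S1.
have T := eqw_cat (cpowD (cF - cG) cG) (eqw_cat (pw_add Rel y (a2 - b2) b2)
   (eqw_catl M (pw_add Rel y b1 (a1 - b1)))).
rewrite subrK [b1 + _]addrC subrK in T.
by rewrite -!catA subrK in T *.
Qed.
End Lift.
End P7.
Import P7.

Module P8.
Set Implicit Arguments. Unset Strict Implicit. Unset Printing Implicit Defensive.
Import GRing.Theory Num.Theory.
Local Open Scope ring_scope.

Lemma gen_word_cat gens u v : gen_word gens u -> gen_word gens v -> gen_word gens (u ++ v).
Proof.
move=> [l1 [H1 ->]] [l2 [H2 ->]]; exists (l1 ++ l2).
by rewrite all_cat H1 H2 map_cat flatten_cat.
Qed.

Lemma gen_word_pow gens i g (M : nat) (c : int) :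
  (i < size gens)%N -> nth [::] gens i = nseq M (g, false) -> gen_word gens (pw g (M%:Z * c)).
Proof.
move=> Hi Hn; have [j [b ->]] := pw_mul g M c.
exists (nseq j (i, b)); split; first by rewrite all_nseq /= Hi orbT.
rewrite map_nseq /= Hn; case: b => //; by rewrite inv_word_nseq.
Qed.

Lemma run_wordR Mod (hMod : forall g, 0 < Mod g) s us : wf Mod s ->
  run Mod s (wordR us) = foldl (Rs Mod) s us.
Proof.
elim: us s => //= z us IH s Hs.
by rewrite run_cat run_pw // IH //; apply: wf_Rs.
Qed.

Lemma run_rels_t Mod (hMod : forall g, 0 < Mod g) (m n t : nat) :
  ((Mod ga %| m%:Z)%Z \/ (Mod gb %| n%:Z)%Z) -> (Mod ga %| (m * t)%N%:Z)%Z -> (Mod gb %| (n * t)%N%:Z)%Z ->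
  forall r, List.In r (rels_t m n t) -> forall s, wf Mod s -> run Mod s r = s.
Proof.
move=> Hc Ha Hb r Hr s Hs.
have Hd0 : forall (d : int) (k : int), (d %| k)%Z -> (d %| - k)%Z.
  by move=> d k /dvdzP [c ->]; apply/dvdzP; exists (- c); rewrite mulNr.
case: Hr => [<-|[<-|[<-|[]]]].
- rewrite /comm_w /apow /bpow !inv_word_nseq /= !run_cat !run_nseq //=; try by repeat apply: wf_Rs.
  case: Hc => H.
  + rewrite (Rs_triv hMod Hs (Hd0 _ _ H)) (Rs_triv hMod _ H); last by apply: wf_Rs.
    by rewrite Rs_merge // addNr Rs0.
  + rewrite (Rs_triv hMod _ (Hd0 _ _ H)); last by apply: wf_Rs.
    rewrite Rs_merge // addNr Rs0 // Rs_triv //.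
- by rewrite /apow run_nseq //= Rs_triv.
- by rewrite /bpow run_nseq //= Rs_triv.
Qed.

Lemma main_gen (m n : nat) (x y : gen) (p q : nat) (Sg : seq word) (f g : word) :
  x != y -> (0 < p)%N -> (0 < q)%N ->
  eqw (rels m n) (pw x p ++ pw y q) (pw y q ++ pw x p) ->
  (forall w, gen_word Sg w -> exists us, all (Sunit x y q) us /\ w = wordR us) ->
  (exists i, (i < size (Hgens m n))%N /\ nth [::] (Hgens m n) i = nseq p (x, false)) ->
  (exists i, (i < size (Hgens m n))%N /\ nth [::] (Hgens m n) i = nseq q (y, false)) ->
  (forall t0, (0 < t0)%N -> forall i, (i < size (Hgens m n))%N ->
     exists g k, nth [::] (Hgens m n) i = nseq k (g, false) /\ (g = y \/ (ModL x p q t0 g %| k%:Z)%Z)) ->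
  (forall t0 t, (0 < t0)%N -> (0 < t)%N -> (t0 %| t)%N -> forall r, List.In r (rels_t m n t) ->
     forall s, wf (ModL x p q t0) s -> run (ModL x p q t0) s r = s) ->
  in_subgroup (rels m n) Sg f -> in_subgroup (rels m n) Sg g ->
  ~ in_dcoset (rels m n) (Hgens m n) f g ->
  exists t0 : nat, (1 < t0)%N /\
    forall t : nat, (0 < t)%N -> (t0 %| t)%N ->
      ~ in_dcoset (rels_t m n t) (Hgens m n) f g.
Proof.
move=> hxy hp hq hcomm hS [ix [Hix Hnx]] [iy [Hiy Hny]] HHm HRel [wF [GF EF]] [wG [GG EG]] Hnot.
have [usF [HuF EwF]] := hS _ GF; have [usG [HuG EwG]] := hS _ GG; subst wF wG.
set t0 := (2 * (size usF + size usG) + 3)%N.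
have ht0 : (0 < t0)%N by rewrite /t0; lia.
exists t0; split; first by rewrite /t0; lia.
move=> t ht Hdt [h1 [h2 [H1 [H2 He]]]].
have mono : forall u v, eqw (rels m n) u v -> eqw (rels_t m n t) u v.
  move=> u v; apply: eqw_mono => r /= [<-|[]]; by left.
have HeT : eqw (rels_t m n t) (wordR usF) (h1 ++ wordR usG ++ h2).
  apply: eqw_trans (mono _ _ (eqw_sym EF)) _.
  apply: eqw_trans He _; apply: eqw_ctx; exact: mono.
have hMod := ModL_pos x hp hq ht0.
have HI := model_sep hMod (HHm _ ht0) (HRel _ _ ht0 ht Hdt) H1 H2 HeT.
rewrite !run_wordR // in HI.
have bF : (2 * (q * size usF) < q * t0)%N.
  by rewrite mulnCA ltn_pmul2l // /t0; lia.
have bG : (2 * (q * size usG) < q * t0)%N.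
  by rewrite mulnCA ltn_pmul2l // /t0; lia.
have [c [a [b [Ha Hb E]]]] := lift_dc hxy hp hq ht0 hcomm HuF HuG bF bG HI.
apply: Hnot; exists (pw x (p%:Z * c) ++ pw y a), (pw y b); split; last split.
- apply: gen_word_cat; first exact: gen_word_pow Hix Hnx.
  by case/dvdzP: Ha => k ->; rewrite mulrC; exact: gen_word_pow Hiy Hny.
- by case/dvdzP: Hb => k ->; rewrite mulrC; exact: gen_word_pow Hiy Hny.
apply: eqw_trans EF _; apply: eqw_trans E _.
apply: eqw_ctx; exact: eqw_sym EG.
Qed.

End P8.
Import P8.

Set Implicit Arguments. Unset Strict Implicit. Unset Printing Implicit Defensive.
Import GRing.Theory Num.Theory.

Lemma base_comm m n : eqw (rels m n) (apow m ++ bpow n) (bpow n ++ apow m).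
Proof.
have Hr : eqw (rels m n) (comm_w (apow m) (bpow n)) [::].
  have := @eqw_rel (rels m n) [::] [::] (comm_w (apow m) (bpow n)); rewrite cats0; apply; by left.
have HA : eqw (rels m n) (apow m ++ inv_word (apow m)) [::].
  rewrite /apow inv_word_nseq -pw_nat -pwN_nat; exact: pw_inv.
have HB : eqw (rels m n) (bpow n ++ inv_word (bpow n)) [::].
  rewrite /bpow inv_word_nseq -pw_nat -pwN_nat; exact: pw_inv.
apply: eqw_sym.
apply: (@eqw_trans _ _ (bpow n ++ apow m ++ comm_w (apow m) (bpow n))).
  have := eqw_catl (bpow n ++ apow m) (eqw_sym Hr); rewrite cats0 -catA; exact.
rewrite /comm_w.
apply: (@eqw_trans _ _ (bpow n ++ inv_word (bpow n) ++ apow m ++ bpow n)).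
  apply: eqw_catl; rewrite !catA; do 2 apply: eqw_catr.
  by have := eqw_catr (inv_word (bpow n)) HA; rewrite -catA; exact.
by rewrite catA; have := eqw_catr (apow m ++ bpow n) HB; exact.
Qed.


Lemma ModL_dvd (a b : nat) : (a %| b)%N -> (a%:Z %| b%:Z)%Z.
Proof. by rewrite dvdzE. Qed.

Theorem proposition2p6 (m n : nat) (hm : 1 < m) (hn : 1 < n) (f g : word) :
  ((in_subgroup (rels m n) (Agens m n) f /\ in_subgroup (rels m n) (Agens m n) g)
   \/ (in_subgroup (rels m n) (Bgens m n) f /\ in_subgroup (rels m n) (Bgens m n) g)) ->
  ~ in_dcoset (rels m n) (Hgens m n) f g ->
  exists t0 : nat, 1 < t0 /\
    forall t : nat, 0 < t -> t0 %| t ->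
      ~ in_dcoset (rels_t m n t) (Hgens m n) f g.
Proof.
have hm0 : 0 < m by lia.
have hn0 : 0 < n by lia.
case=> [[Hf Hg]|[Hf Hg]] Hnot.
- apply: (@main_gen m n ga gb m n (Agens m n)) => //.
  + exact: base_comm.
  + move=> w [l [Hl ->]].
    exists (map (fun pb : nat * bool => match pb.1 with
                 | 0 => (ga, if pb.2 then (-1)%R else 1%R)
                 | 1 => (ga, if pb.2 then (- Posz m)%R else Posz m)
                 | _ => (gb, if pb.2 then (- Posz n)%R else Posz n) end) l).
    split.
      rewrite all_map; apply/allP => [[i b]] /(allP Hl) /= Hi.
      case: i Hi => [|[|[|i]]] //= _; rewrite /Sunit /=; case: b => //=.
        by rewrite dvdzE !abszN dvdnn leqnn.
      by rewrite dvdzz leqnn.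
    rewrite /wordR -map_comp; congr (flatten _); apply/eq_in_map => [[i b]] /(allP Hl) /= Hi.
    case: i Hi => [|[|[|i]]] //= _; case: b => //=;
      by rewrite /apow /bpow inv_word_nseq -pwN_nat.
  + by exists 0%N.
  + by exists 1%N.
  + move=> t0 ht0 [|[|i]] //= _.
    * by exists ga, m; split => //; right; rewrite /ModL eqxx dvdzz.
    * by exists gb, n; split => //; left.
  + move=> t0 t ht0 ht Hdt; apply: run_rels_t; first exact: ModL_pos.
    * by left; rewrite /ModL eqxx dvdzz.
    * by rewrite /ModL eqxx ModL_dvd // dvdn_mulr.
    * by rewrite /ModL /= ModL_dvd // dvdn_pmul2l.
- apply: (@main_gen m n gb ga n m (Bgens m n)) => //.
  + apply: eqw_sym; exact: base_comm.
  + move=> w [l [Hl ->]].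
    exists (map (fun pb : nat * bool => match pb.1 with
                 | 0 => (gb, if pb.2 then (-1)%R else 1%R)
                 | 1 => (ga, if pb.2 then (- Posz m)%R else Posz m)
                 | _ => (gb, if pb.2 then (- Posz n)%R else Posz n) end) l).
    split.
      rewrite all_map; apply/allP => [[i b]] /(allP Hl) /= Hi.
      case: i Hi => [|[|[|i]]] //= _; rewrite /Sunit /=; case: b => //=.
        by rewrite dvdzE !abszN dvdnn leqnn.
      by rewrite dvdzz leqnn.
    rewrite /wordR -map_comp; congr (flatten _); apply/eq_in_map => [[i b]] /(allP Hl) /= Hi.
    case: i Hi => [|[|[|i]]] //= _; case: b => //=;
      by rewrite /apow /bpow inv_word_nseq -pwN_nat.
  + by exists 1%N.
  + by exists 0%N.
  + move=> t0 ht0 [|[|i]] //= _.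
    * by exists ga, m; split => //; left.
    * by exists gb, n; split => //; right; rewrite /ModL eqxx dvdzz.
  + move=> t0 t ht0 ht Hdt; apply: run_rels_t; first exact: ModL_pos.
    * by right; rewrite /ModL eqxx dvdzz.
    * by rewrite /ModL /= ModL_dvd // dvdn_pmul2l.
    * by rewrite /ModL eqxx ModL_dvd // dvdn_mulr.
Qed.
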